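(* Every $f\in\operatorname{NDPF}^{(1)}_N$ is entirely determined by its set of fibers, its set of images, and the single value $f(i)$ for one $i\in\mathbb{Z}$.
   Context: $\operatorname{NDPF}^{(1)}_N$ is the set of functions $f:\mathbb{Z}\to\mathbb{Z}$ that are regressive ($f(i)\le i$), order preserving ($i\le j\Rightarrow f(i)\le f(j)$) and skew periodic ($f(i+N)=f(i)+N$), excluding the shift functions $i\mapsto i-t$ with $t\ne0$. The fibers of $f$ are the nonempty sets $f^{-1}(a)$, $a\in\mathbb{Z}$. *)

(* Defs.v *)
From Stdlib Require Import ZArith.
Open Scope Z_scope.

Definition regressive (f : Z -> Z) : Prop := forall i, f i <= i.
Definition order_preserving (f : Z -> Z) : Prop := forall i j, i <= j -> f i <= f j.
Definition skew_periodic (N : Z) (f : Z -> Z) : Prop := forall i, f (i + N) = f i + N.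
Definition is_shift (f : Z -> Z) (t : Z) : Prop := forall i, f i = i - t.

Definition NDPF1 (N : Z) (f : Z -> Z) : Prop :=
  regressive f /\ order_preserving f /\ skew_periodic N f /\
  ~ (exists t, t <> 0 /\ is_shift f t).

Definition is_fiber (f : Z -> Z) (S : Z -> Prop) : Prop :=
  exists a, (exists x, f x = a) /\ (forall x, S x <-> f x = a).

Definition in_image (f : Z -> Z) (y : Z) : Prop := exists x, f x = y.

(* Main.v *)
Require Import Defs.
From Stdlib Require Import ZArith Lia.
Open Scope Z_scope.

Lemma fib_eq (f g : Z -> Z) :
  (forall S : Z -> Prop, is_fiber f S <-> is_fiber g S) ->
  forall x y, f x = f y -> g x = g y.
Proof.
  intros H x y Hxy.
  destruct (proj1 (H (fun t => f t = f x)) ltac:(exists (f x); split; [exists x; reflexivity| tauto]))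
    as [a [_ Ha]].
  assert (g x = a) by (apply Ha; reflexivity).
  assert (g y = a) by (apply Ha; congruence).
  congruence.
Qed.

Lemma lt_tr (f g : Z -> Z) :
  order_preserving f -> order_preserving g ->
  (forall x y, g x = g y -> f x = f y) ->
  forall x y, f x < f y -> g x < g y.
Proof.
  intros Hf Hg Hfe x y H.
  assert (x < y).
  { destruct (Z_lt_le_dec x y); auto. pose proof (Hf y x l); lia. }
  pose proof (Hg x y ltac:(lia)).
  destruct (Z.eq_dec (g x) (g y)) as [E|E]; [apply Hfe in E; lia | lia].
Qed.

Theorem mainTheorem8 (N : Z) (HN : 0 < N) (f g : Z -> Z) :
  NDPF1 N f -> NDPF1 N g ->
  (forall S : Z -> Prop, is_fiber f S <-> is_fiber g S) ->
  (forall y : Z, in_image f y <-> in_image g y) ->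
  forall i : Z, f i = g i ->
  forall x : Z, f x = g x.
Proof.
  intros [_ [Hf _]] [_ [Hg _]] Hfib Him i Hi.
  assert (E1 := fib_eq f g Hfib).
  assert (E2 : forall x y, g x = g y -> f x = f y).
  { apply fib_eq. intros S; split; apply Hfib. }
  assert (L1 := lt_tr f g Hf Hg E2).
  assert (L2 := lt_tr g f Hg Hf E1).
  assert (K : forall n : nat, forall x, (Z.abs_nat (f x - f i) <= n)%nat -> f x = g x).
  { induction n as [|n IH]; intros x Hx.
    - assert (f x = f i) by lia. pose proof (E1 x i H). lia.
    - destruct (Z.eq_dec (f x) (g x)) as [e|ne]; [exact e|exfalso].
      destruct (Z.eq_dec (f x) (f i)) as [e|ne2].
      { pose proof (E1 x i e). lia. }
      destruct (proj2 (Him (g x)) ltac:(exists x; reflexivity)) as [z1 Hz1].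
      destruct (proj1 (Him (f x)) ltac:(exists x; reflexivity)) as [z2 Hz2].
      destruct (Z_lt_le_dec (f x) (f i)) as [lo|hi];
      destruct (Z_lt_le_dec (f x) (g x)) as [c|c].
      +
        assert (HA: f x < f z1) by lia.
        pose proof (L1 _ _ HA).
        pose proof (L1 x i lo).
        assert (f z1 = g z1) by (apply IH; lia). lia.
      + assert (HA: g x < g z2) by lia.
        pose proof (L2 _ _ HA).
        pose proof (L2 z2 i ltac:(lia)).
        assert (f z2 = g z2) by (apply IH; lia). lia.
      + assert (HA: g z2 < g x) by lia.
        pose proof (L2 _ _ HA).
        pose proof (L2 i z2 ltac:(lia)).
        assert (f z2 = g z2) by (apply IH; lia). lia.
      + assert (HA: f z1 < f x) by lia.
        pose proof (L1 _ _ HA).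
        pose proof (L1 i x ltac:(lia)).
        assert (f z1 = g z1) by (apply IH; lia). lia. }
  intros x. apply (K (Z.abs_nat (f x - f i))). lia.
Qed.
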